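(* Let $\mathcal{H}$ be an $n$-dimensional (real or complex) Hilbert space, let $F=\{f_i\}_{i=1}^N$ be a tight frame for $\mathcal{H}$, and let $\{q_i\}_{i=1}^N$ be the weight number sequence associated with a probability sequence $\{p_i\}_{i=1}^N$. Then $(F,S_F^{-1}F)$ is the unique 1-erasure POD-pair among the dual pairs $(F,G)$ with $G$ a dual of $F$ if and only if $(F,S_F^{-1}F)$ is the unique 1-erasure PASOD-pair among the dual pairs $(F,G)$ with $G$ a dual of $F$.
   Context: A finite sequence $F=\{f_i\}_{i=1}^N$ in $\mathcal{H}$ is a frame if there are $A,B>0$ with $A\|f\|^2\le\sum_{i=1}^N|\langle f,f_i\rangle|^2\le B\|f\|^2$ for all $f$; it is tight if one can take $A=B$. The frame operator is $S_Ff=\sum_i\langle f,f_i\rangle f_i$; canonical dual $S_F^{-1}F=\{S_F^{-1}f_i\}_{i=1}^N$. A frame $G=\{g_i\}_{i=1}^N$ is a dual of $F$ if $f=\sum_i\langle f,f_i\rangle g_i=\sum_i\langle f,g_i\rangle f_i$ for all $f$; then $(F,G)$ is an $(N,n)$ dual pair. A probability sequence is $\{p_i\}_{i=1}^N$ with $0\le p_i\le1$, $\sum p_i=1$; weight numbers $q_i=\frac{\sum_{j} p_j}{\sum_{j} p_j-p_i}\cdot\frac{N-1}{n}$. For $\Lambda\subseteq\{1,\dots,N\}$ the error operator is $E_{\Lambda,(F,G)}f=\sum_{i\in\Lambda}q_i\langle f,f_i\rangle g_i$. Let $\mathcal{O}_P^{(1)}(F,G)=\max_{|\Lambda|=1}\|E_{\Lambda,(F,G)}\|$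 and $\mathcal{A}_P^{(1)}(F,G)=\max_{|\Lambda|=1}\frac{\|E_{\Lambda,(F,G)}\|+\rho(E_{\Lambda,(F,G)})}{2}$ ($\rho$ = spectral radius); let $\mathcal{O}_P^{(1)}$ and $\mathcal{A}_P^{(1)}$ be their infima over all $(N,n)$ dual pairs in $\mathcal{H}$. A dual pair is a 1-erasure POD-pair if $\mathcal{O}_P^{(1)}(F,G)=\mathcal{O}_P^{(1)}$, and a 1-erasure PASOD-pair if $\mathcal{A}_P^{(1)}(F,G)=\mathcal{A}_P^{(1)}$. *)

(* Defs.v *)
From HB Require Import structures.
From mathcomp Require Import all_boot all_order all_algebra.
From mathcomp Require Import boolp classical_sets reals.
From mathcomp Require Import complex.
Set Implicit Arguments. Unset Strict Implicit. Unset Printing Implicit Defensive.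
Import Order.TTheory GRing.Theory Num.Theory.
Local Open Scope ring_scope.

(* The scalar field of the Hilbert space: either R or C = R[i].
   sK = scalar field, sconj = complex conjugation (identity over R),
   sabs = modulus (real valued), sofR = inclusion of the reals into sK,
   stoC = inclusion of sK into the complex numbers (used to compute the
   spectrum, i.e. complex eigenvalues, also for real operators). *)
Record scalars (R : realType) := Scalars {
  sK : fieldType;
  sconj : sK -> sK;
  sabs : sK -> R;
  sofR : R -> sK;
  stoC : sK -> R[i]
}.

Definition realScalars (R : realType) : scalars R :=
  @Scalars R R id (fun x => `|x|) id (fun x => x%:C%C).

Definition complexScalars (R : realType) : scalars R :=
  @Scalars R R[i] (fun z => z^*%C) (fun z => Normc.normc z) (fun x => x%:C%C) id.

Section Frames.
Variables (R : realType) (S : scalars R) (n N : nat).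
Local Notation K := (sK S).
Local Notation vec := 'cV[K]_n.

Definition inner (x y : vec) : K := \sum_(k < n) x k 0 * (@sconj _ S) (y k 0).

Definition vnorm (x : vec) : R := Num.sqrt (\sum_(k < n) (@sabs _ S) (x k 0) ^+ 2).

Definition vadj (x : vec) : 'rV[K]_n := map_mx ((@sconj _ S)) x^T.

Definition opnorm (A : 'M[K]_n) : R :=
  sup [set vnorm (A *m x) | x in [set x : vec | vnorm x = 1]]%classic.

Definition specrad (A : 'M[K]_n) : R :=
  sup [set Normc.normc l | l in [set l : R[i] | eigenvalue (map_mx ((@stoC _ S)) A) l]].

Definition is_frame (F : 'I_N -> vec) : Prop :=
  exists A B : R, 0 < A /\ 0 < B /\
    forall f : vec,
      A * vnorm f ^+ 2 <= \sum_i (@sabs _ S) (inner f (F i)) ^+ 2 /\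
      \sum_i (@sabs _ S) (inner f (F i)) ^+ 2 <= B * vnorm f ^+ 2.

Definition is_tight_frame (F : 'I_N -> vec) : Prop :=
  is_frame F /\
  exists A : R, 0 < A /\
    forall f : vec, \sum_i (@sabs _ S) (inner f (F i)) ^+ 2 = A * vnorm f ^+ 2.

Definition frame_op (F : 'I_N -> vec) : 'M[K]_n := \sum_i (F i *m vadj (F i)).

Definition canon_dual (F : 'I_N -> vec) : 'I_N -> vec :=
  fun i => invmx (frame_op F) *m F i.

Definition is_dual (F G : 'I_N -> vec) : Prop :=
  is_frame G /\
  forall f : vec,
    f = \sum_i inner f (F i) *: G i /\ f = \sum_i inner f (G i) *: F i.

Definition prob_seq (p : 'I_N -> R) : Prop :=
  (forall i, 0 <= p i <= 1) /\ \sum_i p i = 1.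

Definition weight (p : 'I_N -> R) (i : 'I_N) : R :=
  (\sum_j p j) / (\sum_j p j - p i) * ((N - 1)%:R / n%:R).

Definition err_op (p : 'I_N -> R) (F G : 'I_N -> vec) (L : {set 'I_N})
  : 'M[K]_n :=
  \sum_(i in L) (@sofR _ S) (weight p i) *: (G i *m vadj (F i)).

Definition O1 (p : 'I_N -> R) (F G : 'I_N -> vec) : R :=
  \big[Num.max/0]_(L : {set 'I_N} | #|L| == 1%N) opnorm (err_op p F G L).

Definition A1 (p : 'I_N -> R) (F G : 'I_N -> vec) : R :=
  \big[Num.max/0]_(L : {set 'I_N} | #|L| == 1%N)
     ((opnorm (err_op p F G L) + specrad (err_op p F G L)) / 2).

Definition POD_among_duals (p : 'I_N -> R) (F G0 : 'I_N -> vec) : Prop :=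
  is_dual F G0 /\ forall G, is_dual F G -> O1 p F G0 <= O1 p F G.

Definition PASOD_among_duals (p : 'I_N -> R) (F G0 : 'I_N -> vec) : Prop :=
  is_dual F G0 /\ forall G, is_dual F G -> A1 p F G0 <= A1 p F G.

Definition unique_POD_among_duals (p : 'I_N -> R) (F G0 : 'I_N -> vec) : Prop :=
  POD_among_duals p F G0 /\ forall G, POD_among_duals p F G -> G = G0.

Definition unique_PASOD_among_duals (p : 'I_N -> R) (F G0 : 'I_N -> vec) : Prop :=
  PASOD_among_duals p F G0 /\ forall G, PASOD_among_duals p F G -> G = G0.

End Frames.

(* Main.v *)
Require Import Defs.
From HB Require Import structures.
From mathcomp Require Import all_boot all_order all_algebra.
From mathcomp Require Import boolp classical_sets reals.
From mathcomp Require Import complex.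
From mathcomp Require Import ring lra.
Set Implicit Arguments. Unset Strict Implicit. Unset Printing Implicit Defensive.
Import Order.TTheory GRing.Theory Num.Theory.
Local Open Scope ring_scope.

Section GoodDef.
Variables (R : realType) (S : scalars R).
Local Notation cj := (@sconj _ S).
Local Notation ab := (@sabs _ S).
Local Notation ofR := (@sofR _ S).
Local Notation toC := (@stoC _ S).
Record good := Good {
  gre : sK S -> R;
  cjD : forall x y, cj (x + y) = cj x + cj y;
  cjM : forall x y, cj (x * y) = cj x * cj y;
  cjK : forall x, cj (cj x) = x;
  cjR : forall r, cj (ofR r) = ofR r;
  ofRD : forall a b, ofR (a + b) = ofR a + ofR b;
  ofRM : forall a b, ofR (a * b) = ofR a * ofR b;
  ofR1 : ofR 1 = 1;
  ofR_inj : injective ofR;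
  normK : forall x, x * cj x = ofR (ab x ^+ 2);
  abM : forall x y, ab (x * y) = ab x * ab y;
  abD : forall x y, ab (x + y) <= ab x + ab y;
  ab_ge0 : forall x, 0 <= ab x;
  ab_eq0 : forall x, ab x = 0 -> x = 0;
  abR : forall r, ab (ofR r) = `|r|;
  abcj : forall x, ab (cj x) = ab x;
  reP : forall x, ofR (gre x *+ 2) = x + cj x;
  re_le : forall x, gre x <= ab x;
  toCD : forall x y, toC (x + y) = toC x + toC y;
  toCM : forall x y, toC (x * y) = toC x * toC y;
  toC0 : toC 0 = 0;
  toCcj : forall x, toC (cj x) = (toC x)^*%C;
  toCab : forall x, Normc.normc (toC x) = ab x;
  toCR : forall r, toC (ofR r) = r%:C%C
}.
End GoodDef.

Lemma good_real (R : realType) : good (realScalars R).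
Proof.
apply: (@Good R (realScalars R) id) => //=.
- by move=> x; rewrite real_normK ?num_real // expr2.
- exact: normrM.
- exact: ler_normD.
- by move=> x /eqP; rewrite normr_eq0 => /eqP.
- exact: ler_norm.
- by move=> x y; rewrite rmorphD.
- by move=> x y; rewrite rmorphM.
- by move=> x; apply/eqP; rewrite eq_complex /= oppr0 !eqxx.
- by move=> x; rewrite expr0n /= addr0 sqrtr_sqr.
Qed.
Lemma good_complex (R : realType) : good (complexScalars R).
Proof.
apply: (@Good R (complexScalars R) (@complex.Re R)) => //=.
- by move=> x y; rewrite rmorphD.
- by move=> x y; rewrite rmorphM.
- exact: conjcK.
- by move=> r; apply/eqP; rewrite eq_complex /= oppr0 !eqxx.
- by move=> x y; rewrite rmorphD.
- by move=> x y; rewrite rmorphM.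
- exact: complexI.
- case=> a b; rewrite /Normc.normc /= sqr_sqrtr ?addr_ge0 ?sqr_ge0 //.
  by apply/eqP; rewrite eq_complex /= !expr2; apply/andP; split; apply/eqP; ring.
- exact: Normc.normcM.
- exact: le_normcD.
- by case=> a b; rewrite /Normc.normc /= sqrtr_ge0.
- exact: Normc.eq0_normc.
- by move=> x; rewrite expr0n /= addr0 sqrtr_sqr.
- by case=> a b; rewrite /Normc.normc /= sqrrN.
- case=> a b; apply/eqP; rewrite eq_complex /=; apply/andP; split; apply/eqP;
    rewrite ?mulr2n; ring.
- case=> a b; rewrite /Normc.normc /=.
  apply: (le_trans (ler_norm a)); rewrite -sqrtr_sqr ler_sqrt ?addr_ge0 ?sqr_ge0 //.
  by rewrite lerDl sqr_ge0.
Qed.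

Lemma cs_real (R : realType) (I : finType) (a b : I -> R) :
  (\sum_i a i * b i) ^+ 2 <= (\sum_i a i ^+ 2) * (\sum_i b i ^+ 2).
Proof.
set X := \sum_i a i ^+ 2; set Y := \sum_i b i ^+ 2; set P := \sum_i a i * b i.
have E1 : \sum_i \sum_j a i ^+ 2 * b j ^+ 2 = X * Y.
  by rewrite /X /Y mulr_suml; apply: eq_bigr => i _; rewrite mulr_sumr.
have E2 : \sum_i \sum_j a j ^+ 2 * b i ^+ 2 = X * Y.
  by rewrite exchange_big /=; apply: E1.
have E3 : \sum_i \sum_j (a i * b i) * (a j * b j) = P ^+ 2.
  by rewrite expr2 /P mulr_suml; apply: eq_bigr => i _; rewrite mulr_sumr.
have H0 : 0 <= \sum_i \sum_j (a i * b j - a j * b i) ^+ 2.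
  by apply: sumr_ge0 => i _; apply: sumr_ge0 => j _; apply: sqr_ge0.
have H1 : \sum_i \sum_j (a i * b j - a j * b i) ^+ 2 =
   \sum_i \sum_j (a i ^+ 2 * b j ^+ 2 + a j ^+ 2 * b i ^+ 2
                  - ((a i * b i) * (a j * b j)) *+ 2).
  by apply: eq_bigr => i _; apply: eq_bigr => j _; rewrite mulr2n; ring.
have H2 : \sum_i \sum_j (a i ^+ 2 * b j ^+ 2 + a j ^+ 2 * b i ^+ 2
                  - ((a i * b i) * (a j * b j)) *+ 2) = X * Y + X * Y - P ^+ 2 *+ 2.
  rewrite -{1}E1 -E2 -E3 -sumrMnl -big_split -sumrB /=.
  apply: eq_bigr => i _; rewrite -sumrMnl -big_split -sumrB /=.
  done.
rewrite H1 H2 in H0; rewrite mulr2n in H0; lra.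
Qed.

Lemma cs_real_sqrt (R : realType) (I : finType) (a b : I -> R) :
  \sum_i a i * b i <= Num.sqrt (\sum_i a i ^+ 2) * Num.sqrt (\sum_i b i ^+ 2).
Proof.
have Xge : 0 <= \sum_i a i ^+ 2 by apply: sumr_ge0 => i _; apply: sqr_ge0.
rewrite -sqrtrM //.
apply: (le_trans (ler_norm _)); rewrite -sqrtr_sqr ler_sqrt.
  exact: cs_real.
by rewrite mulr_ge0 // sumr_ge0 // => i _; apply: sqr_ge0.
Qed.

Section Gen.
Variables (R : realType) (S : scalars R) (Hg : good S).
Local Notation K := (sK S).
Local Notation cj := (@sconj _ S).
Local Notation ab := (@sabs _ S).
Local Notation ofR := (@sofR _ S).
Local Notation toC := (@stoC _ S).
Local Notation re := (gre Hg).

Lemma ofR0 : ofR 0 = 0.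
Proof. by apply: (@addrI _ (ofR 0)); rewrite -(ofRD Hg) !addr0. Qed.
Lemma ofRN a : ofR (- a) = - ofR a.
Proof. by apply: (@addrI _ (ofR a)); rewrite -(ofRD Hg) !subrr ofR0. Qed.
Lemma ofRB a b : ofR (a - b) = ofR a - ofR b.
Proof. by rewrite (ofRD Hg) ofRN. Qed.
Lemma ofRMn a k : ofR (a *+ k) = ofR a *+ k.
Proof. by elim: k => [|k IH]; rewrite ?ofR0 // !mulrS (ofRD Hg) IH. Qed.
Lemma ofR_sum (I : Type) (r : seq I) (P : pred I) (F : I -> R) :
  ofR (\sum_(i <- r | P i) F i) = \sum_(i <- r | P i) ofR (F i).
Proof. exact: (big_morph _ (ofRD Hg) ofR0). Qed.
Lemma ofR_eq0 a : (ofR a == 0) = (a == 0).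
Proof.
apply/eqP/eqP => [h|->]; last exact: ofR0.
by apply: (ofR_inj Hg); rewrite h ofR0.
Qed.
Lemma ofRV a : ofR (a^-1) = (ofR a)^-1.
Proof.
have [->|a0] := eqVneq a 0; first by rewrite invr0 ofR0 invr0.
have h : ofR a != 0 by rewrite ofR_eq0.
by apply: (mulfI h); rewrite -(ofRM Hg) !divff // (ofR1 Hg).
Qed.

Lemma cj0 : cj 0 = 0.
Proof. by rewrite -ofR0 (cjR Hg). Qed.
Lemma cjN x : cj (- x) = - cj x.
Proof. by apply: (@addrI _ (cj x)); rewrite -(cjD Hg) !subrr cj0. Qed.
Lemma cjB x y : cj (x - y) = cj x - cj y.
Proof. by rewrite (cjD Hg) cjN. Qed.
Lemma cj_sum (I : Type) (r : seq I) (P : pred I) (F : I -> K) :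
  cj (\sum_(i <- r | P i) F i) = \sum_(i <- r | P i) cj (F i).
Proof. exact: (big_morph _ (cjD Hg) cj0). Qed.
Lemma toC_sum (I : Type) (r : seq I) (P : pred I) (F : I -> K) :
  toC (\sum_(i <- r | P i) F i) = \sum_(i <- r | P i) toC (F i).
Proof. exact: (big_morph _ (toCD Hg) (toC0 Hg)). Qed.

Lemma ab0 : ab 0 = 0.
Proof. by rewrite -ofR0 (abR Hg) normr0. Qed.
Lemma abN x : ab (- x) = ab x.
Proof.
have -> : - x = ofR (-1) * x by rewrite ofRN (ofR1 Hg) mulN1r.
by rewrite (abM Hg) (abR Hg) normrN normr1 mul1r.
Qed.
Lemma ab_sum (I : Type) (r : seq I) (P : pred I) (F : I -> K) :
  ab (\sum_(i <- r | P i) F i) <= \sum_(i <- r | P i) ab (F i).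
Proof.
elim/big_rec2: _ => [|i y1 y2 _ IH]; first by rewrite ab0.
by apply: (le_trans (abD Hg _ _)); rewrite lerD2l.
Qed.
Lemma abR_ge0 r : 0 <= r -> ab (ofR r) = r.
Proof. by move=> h; rewrite (abR Hg) ger0_norm. Qed.

Lemma re_uniq x r : ofR (r *+ 2) = x + cj x -> re x = r.
Proof.
move=> h; have : ofR (re x *+ 2) = ofR (r *+ 2) by rewrite (reP Hg) h.
by move/(ofR_inj Hg); rewrite !mulr2n => /eqP; rewrite -!mulr2n eqrMn2r => /eqP.
Qed.
Lemma reR r : re (ofR r) = r.
Proof. by apply: re_uniq; rewrite (cjR Hg) ofRMn mulr2n. Qed.
Lemma reD x y : re (x + y) = re x + re y.
Proof.
apply: re_uniq; rewrite mulrnDl (ofRD Hg) !(reP Hg) (cjD Hg).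
by rewrite addrACA.
Qed.
Lemma reN x : re (- x) = - re x.
Proof. by apply: re_uniq; rewrite mulNrn ofRN (reP Hg) cjN opprD. Qed.
Lemma reB x y : re (x - y) = re x - re y.
Proof. by rewrite reD reN. Qed.
Lemma reZ r x : re (ofR r * x) = r * re x.
Proof.
by apply: re_uniq; rewrite -mulrnAr (ofRM Hg) (reP Hg) (cjM Hg) (cjR Hg) mulrDr.
Qed.
Lemma re_cj x : re (cj x) = re x.
Proof. by apply: re_uniq; rewrite (reP Hg) (cjK Hg) addrC. Qed.
Lemma re_ge x : - ab x <= re x.
Proof. by rewrite lerNl -reN -abN (re_le Hg). Qed.


Variable n : nat.
Local Notation vec := 'cV[K]_n.

Definition nsq (x : vec) : R := \sum_k ab (x k 0) ^+ 2.

Lemma vnormE (x : vec) : vnorm x = Num.sqrt (nsq x).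
Proof. by []. Qed.
Lemma nsq_ge0 (x : vec) : 0 <= nsq x.
Proof. by apply: sumr_ge0 => k _; apply: sqr_ge0. Qed.
Lemma vnorm_ge0 (x : vec) : 0 <= vnorm x.
Proof. exact: sqrtr_ge0. Qed.
Lemma vnorm_sqr (x : vec) : vnorm x ^+ 2 = nsq x.
Proof. by rewrite vnormE sqr_sqrtr // nsq_ge0. Qed.
Lemma inner_self (x : vec) : inner x x = ofR (nsq x).
Proof. by rewrite /inner /nsq ofR_sum; apply: eq_bigr => k _; rewrite (normK Hg). Qed.
Lemma innerDl (x y z : vec) : inner (x + y) z = inner x z + inner y z.
Proof. by rewrite /inner -big_split; apply: eq_bigr => k _; rewrite mxE mulrDl. Qed.
Lemma innerZl a (x y : vec) : inner (a *: x) y = a * inner x y.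
Proof. by rewrite /inner mulr_sumr; apply: eq_bigr => k _; rewrite mxE mulrA. Qed.
Lemma innerNl (x y : vec) : inner (- x) y = - inner x y.
Proof. by rewrite /inner -sumrN; apply: eq_bigr => k _; rewrite mxE mulNr. Qed.
Lemma innerBl (x y z : vec) : inner (x - y) z = inner x z - inner y z.
Proof. by rewrite innerDl innerNl. Qed.
Lemma innerDr (x y z : vec) : inner x (y + z) = inner x y + inner x z.
Proof. by rewrite /inner -big_split; apply: eq_bigr => k _; rewrite mxE (cjD Hg) mulrDr. Qed.
Lemma innerZr a (x y : vec) : inner x (a *: y) = cj a * inner x y.
Proof. by rewrite /inner mulr_sumr; apply: eq_bigr => k _; rewrite mxE (cjM Hg) mulrCA. Qed.
Lemma innerNr (x y : vec) : inner x (- y) = - inner x y.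
Proof. by rewrite /inner -sumrN; apply: eq_bigr => k _; rewrite mxE cjN mulrN. Qed.
Lemma innerBr (x y z : vec) : inner x (y - z) = inner x y - inner x z.
Proof. by rewrite innerDr innerNr. Qed.
Lemma inner_cj (x y : vec) : inner y x = cj (inner x y).
Proof. by rewrite /inner cj_sum; apply: eq_bigr => k _; rewrite (cjM Hg) (cjK Hg) mulrC. Qed.
Lemma inner0l (y : vec) : inner 0 y = 0.
Proof. by rewrite /inner big1 // => k _; rewrite mxE mul0r. Qed.
Lemma inner0r (y : vec) : inner y 0 = 0.
Proof. by rewrite /inner big1 // => k _; rewrite mxE cj0 mulr0. Qed.
Lemma inner_suml (I : Type) (r : seq I) (P : pred I) (v : I -> vec) (y : vec) :
  inner (\sum_(i <- r | P i) v i) y = \sum_(i <- r | P i) inner (v i) y.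
Proof. exact: (big_morph (fun x => inner x y) (fun a b => innerDl a b y) (inner0l y)). Qed.
Lemma inner_sumr (I : Type) (r : seq I) (P : pred I) (v : I -> vec) (y : vec) :
  inner y (\sum_(i <- r | P i) v i) = \sum_(i <- r | P i) inner y (v i).
Proof. exact: (big_morph (fun x => inner y x) (fun a b => innerDr y a b) (inner0r y)). Qed.

Lemma nsq_eq0 (x : vec) : nsq x = 0 -> x = 0.
Proof.
move=> h; apply/matrixP => k j; rewrite ord1 mxE.
have := psumr_eq0P (fun i _ => sqr_ge0 (ab (x i 0))) h (i:=k) isT.
by move/eqP; rewrite sqrf_eq0 => /eqP /(ab_eq0 Hg).
Qed.
Lemma vnorm_eq0 (x : vec) : vnorm x = 0 -> x = 0.
Proof.
move=> h; apply: nsq_eq0; apply/eqP; rewrite eq_le nsq_ge0 andbT.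
by rewrite -sqrtr_eq0 -vnormE h.
Qed.
Lemma nsqZ a (x : vec) : nsq (a *: x) = ab a ^+ 2 * nsq x.
Proof. by rewrite /nsq mulr_sumr; apply: eq_bigr => k _; rewrite mxE (abM Hg) exprMn. Qed.
Lemma vnormZ a (x : vec) : vnorm (a *: x) = ab a * vnorm x.
Proof. by rewrite !vnormE nsqZ sqrtrM ?sqr_ge0 // sqrtr_sqr ger0_norm // (ab_ge0 Hg). Qed.
Lemma nsqD (x y : vec) : nsq (x + y) = nsq x + nsq y + re (inner x y) *+ 2.
Proof.
apply: (ofR_inj Hg); rewrite (ofRD Hg (nsq x + nsq y)) (ofRD Hg (nsq x)) (reP Hg) -!inner_self.
rewrite !innerDl !innerDr (inner_cj x y); ring.
Qed.
Lemma inner_le (x y : vec) : ab (inner x y) <= vnorm x * vnorm y.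
Proof.
apply: (le_trans (ab_sum _ _ _)).
have -> : \sum_k ab (x k 0 * cj (y k 0)) = \sum_k ab (x k 0) * ab (y k 0).
  by apply: eq_bigr => k _; rewrite (abM Hg) (abcj Hg).
exact: cs_real_sqrt.
Qed.
Lemma re_inner_le (x y : vec) : re (inner x y) <= vnorm x * vnorm y.
Proof. exact: (le_trans (re_le Hg _) (inner_le x y)). Qed.
Lemma vnormD (x y : vec) : vnorm (x + y) <= vnorm x + vnorm y.
Proof.
rewrite vnormE -(ger0_norm (addr_ge0 (vnorm_ge0 x) (vnorm_ge0 y))) -sqrtr_sqr.
rewrite ler_sqrt ?sqr_ge0 // nsqD -vnorm_sqr -(vnorm_sqr y).
have := re_inner_le x y; rewrite mulr2n; nra.
Qed.

End Gen.

Lemma sup_char (R : realType) (E : set R) (s : R) : 0 <= s ->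
  (forall y, E y -> 0 <= y <= s) -> (0 < s -> E s) -> sup E = s.
Proof.
move=> s0 hE hs.
have hub : has_ubound E by exists s => y /hE /andP[].
have hsup : forall y, E y -> y <= sup E.
  by move=> y Ey; have h := ub_le_sup hub; rewrite /ubound /= in h; exact: h.
have [[y Ey]|nE] := pselect (exists y, E y); last first.
  have -> : E = set0.
    by apply/seteqP; split => z //= Ez; apply: nE; exists z.
  rewrite sup0; apply/eqP; rewrite eq_le s0 /=.
  by case: (ltrgt0P s) => // /hs Es; exfalso; apply: nE; exists s.
apply/eqP; rewrite eq_le; apply/andP; split.
  by apply: ge_sup; [exists y | move=> z /hE /andP[]].
have [s0'|] := ltP 0 s; first exact: hsup (hs s0').
move=> sle0; apply: (le_trans sle0); have /andP[y0 _] := hE y Ey.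
apply: (le_trans y0); exact: hsup.
Qed.

Lemma normc_ge0 (R : realType) (l : R[i]) : 0 <= Normc.normc l.
Proof. by case: l => a b; rewrite /Normc.normc sqrtr_ge0. Qed.

Section Gen3.
Variables (R : realType) (S : scalars R) (Hg : good S).
Local Notation K := (sK S).
Local Notation cj := (@sconj _ S).
Local Notation ab := (@sabs _ S).
Local Notation ofR := (@sofR _ S).
Local Notation toC := (@stoC _ S).
Local Notation re := (gre Hg).
Variable n : nat.
Local Notation vec := 'cV[K]_n.

Lemma mulvadj (g f x : vec) : (g *m vadj f) *m x = inner x f *: g.
Proof.
rewrite -mulmxA; apply/matrixP => i j; rewrite ord1 !mxE big_ord1 !mxE mulrC.
congr (_ * _); rewrite /inner; apply: eq_bigr => k _; rewrite !mxE mulrC.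
by rewrite ord1.
Qed.

Lemma opnorm_rank1 q (g f : vec) : 0 <= q ->
  opnorm (ofR q *: (g *m vadj f)) = q * vnorm g * vnorm f.
Proof.
move=> q0; apply: sup_char.
- by rewrite !mulr_ge0 // vnorm_ge0.
- move=> y [x /= x1 <-].
  rewrite -scalemxAl mulvadj scalerA (vnormZ Hg) (abM Hg) (abR_ge0 Hg) //.
  rewrite mulr_ge0 ?mulr_ge0 ?(ab_ge0 Hg) ?vnorm_ge0 //=.
  rewrite -!mulrA; apply: ler_wpM2l => //; rewrite mulrC.
  apply: ler_wpM2l; first exact: vnorm_ge0.
  by have := inner_le Hg x f; rewrite x1 mul1r.
- move=> s0; have vf0 : vnorm f != 0.
    by apply: contraTneq s0 => ->; rewrite mulr0 ltxx.
  have vf0' : 0 < vnorm f by rewrite lt_def vf0 vnorm_ge0.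
  exists (ofR (vnorm f)^-1 *: f) => /=.
    by rewrite (vnormZ Hg) (abR_ge0 Hg) ?invr_ge0 ?vnorm_ge0 // mulVf.
  rewrite -scalemxAl mulvadj scalerA (vnormZ Hg) (abM Hg) (abR_ge0 Hg) //.
  rewrite innerZl (inner_self Hg) -(ofRM Hg) (abR_ge0 Hg); last first.
    by rewrite mulr_ge0 ?invr_ge0 ?vnorm_ge0 ?nsq_ge0.
  by rewrite -vnorm_sqr; field.
Qed.

Lemma map_rank1E q (g f : vec) i j :
  (map_mx toC (ofR q *: (g *m vadj f))) i j =
  q%:C%C * toC (g i 0) * (toC (f j 0))^*%C.
Proof.
rewrite !mxE big_ord1 !mxE (toCM Hg) (toCR Hg) (toCM Hg) (toCcj Hg) mulrA.
by rewrite ord1.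
Qed.

Lemma toC_inner (x y : vec) :
  toC (inner x y) = \sum_k toC (x k 0) * (toC (y k 0))^*%C.
Proof.
by rewrite /inner (toC_sum Hg); apply: eq_bigr => k _; rewrite (toCM Hg) (toCcj Hg).
Qed.

Lemma specrad_rank1 q (g f : vec) : 0 <= q ->
  specrad (ofR q *: (g *m vadj f)) = q * ab (inner g f).
Proof.
move=> q0; rewrite /specrad; set M := @map_mx _ _ _ _ _ _; set w := toC (inner g f).
have nw : Normc.normc (q%:C%C * w) = q * ab (inner g f).
  by rewrite Normc.normcM -(toCR Hg) /w !(toCab Hg) (abR_ge0 Hg).
have Mv : forall v : 'rV_n, forall j,
    (v *m M) 0 j = q%:C%C * (\sum_i v 0 i * toC (g i 0)) * (toC (f j 0))^*%C.
  move=> v j; rewrite !mxE mulr_sumr mulr_suml; apply: eq_bigr => i _.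
  by rewrite /M map_rank1E; ring.
apply: sup_char.
- by rewrite mulr_ge0 // (ab_ge0 Hg).
- move=> y [l /= /eigenvalueP [v hv v0] <-].
  have [->|l0] := eqVneq l 0.
    by rewrite Normc.normc0 lexx mulr_ge0 // (ab_ge0 Hg).
  set s := \sum_i v 0 i * toC (g i 0).
  have hj : forall j, l * v 0 j = q%:C%C * s * (toC (f j 0))^*%C.
    by move=> j; rewrite -Mv hv mxE.
  have s0 : s != 0.
    apply: contra v0 => /eqP s0; apply/eqP/matrixP => i j; rewrite ord1 mxE.
    by apply: (mulfI l0); rewrite hj s0 mulr0 mul0r mulr0.
  have : l * s = q%:C%C * w * s.
    rewrite /s mulr_sumr /w toC_inner mulr_sumr mulr_suml; apply: eq_bigr => i _.
    by rewrite [l * _]mulrA hj -/s; ring.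
  move/(mulIf s0) => ->; rewrite nw lexx andbT.
  by rewrite mulr_ge0 // (ab_ge0 Hg).
- move=> s0; exists (q%:C%C * w); last exact: nw.
  rewrite /=; apply/eigenvalueP.
  exists (\row_j (toC (f j 0))^*%C).
    apply/matrixP => i j; rewrite ord1 Mv !mxE; congr (_ * _).
    congr (_ * _); rewrite /w toC_inner.
    by apply: eq_bigr => k _; rewrite mxE mulrC.
  apply: contraTneq s0 => h.
  have w0 : w = 0.
    rewrite /w toC_inner big1 // => k _.
    move/matrixP: h => /(_ 0 k); rewrite !mxE => ->; exact: mulr0.
  by rewrite -nw w0 mulr0 Normc.normc0 ltxx.
Qed.

End Gen3.

Section Gen4.
Variables (R : realType) (S : scalars R) (Hg : good S).
Local Notation K := (sK S).
Local Notation cj := (@sconj _ S).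
Local Notation ab := (@sabs _ S).
Local Notation ofR := (@sofR _ S).
Local Notation toC := (@stoC _ S).
Local Notation re := (gre Hg).
Variables n N : nat.
Local Notation vec := 'cV[K]_n.

Lemma frame_opE (F : 'I_N -> vec) x :
  frame_op F *m x = \sum_i inner x (F i) *: F i.
Proof. by rewrite /frame_op mulmx_suml; apply: eq_bigr => i _; rewrite mulvadj. Qed.

Lemma recon_frame (F G : 'I_N -> vec) : is_frame F ->
  (forall f, f = \sum_i inner f (G i) *: F i) -> is_frame G.
Proof.
move=> [A [B [A0 [B0 hF]]]] hrec.
exists B^-1, (1 + \sum_i nsq (G i)); split; first by rewrite invr_gt0.
split; first by rewrite ltr_wpDr // sumr_ge0 // => i _; apply: nsq_ge0.
move=> f; split.
  set X := \sum_i ab (inner f (G i)) ^+ 2.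
  set Y := \sum_i ab (inner f (F i)) ^+ 2.
  have hY : Y <= B * nsq f by rewrite -vnorm_sqr; case: (hF f).
  have X0 : 0 <= X by apply: sumr_ge0 => i _; apply: sqr_ge0.
  have Y0 : 0 <= Y by apply: sumr_ge0 => i _; apply: sqr_ge0.
  have h1 : nsq f <= Num.sqrt X * Num.sqrt Y.
    have -> : nsq f = ab (ofR (nsq f)) by rewrite (abR_ge0 Hg) // nsq_ge0.
    rewrite -(inner_self Hg) {1}(hrec f) inner_suml.
    apply: (le_trans (ab_sum Hg _ _ _)).
    have -> : \sum_i ab (inner (inner f (G i) *: F i) f) =
              \sum_i ab (inner f (G i)) * ab (inner f (F i)).
      apply: eq_bigr => i _; rewrite innerZl (abM Hg) (inner_cj Hg f (F i)).
      by rewrite (abcj Hg).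
    exact: cs_real_sqrt.
  have h2 : nsq f ^+ 2 <= X * Y.
    have sX := sqr_sqrtr X0; have sY := sqr_sqrtr Y0.
    have := sqrtr_ge0 X; have := sqrtr_ge0 Y; have := nsq_ge0 f.
    rewrite -sX -sY; nra.
  rewrite vnorm_sqr ler_pdivrMl //.
  have [f0|fpos] := eqVneq (nsq f) 0.
    by rewrite f0 mulr_ge0 // ltW.
  have fp : 0 < nsq f by rewrite lt_def fpos nsq_ge0.
  have h3 : nsq f ^+ 2 <= X * (B * nsq f).
    by apply: (le_trans h2); apply: ler_wpM2l.
  rewrite expr2 mulrA [X * B]mulrC in h3.
  by rewrite -(ler_pM2r fp).
rewrite mulrDl mul1r mulr_suml; apply: ler_wpDl.
  by rewrite mulr_ge0 // ?vnorm_ge0 ?sqr_ge0.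
apply: ler_sum => i _.
have h := inner_le Hg f (G i).
rewrite -vnorm_sqr mulrC -exprMn.
apply: lerXn2r => //; rewrite ?nnegrE ?(ab_ge0 Hg) ?mulr_ge0 ?vnorm_ge0 //.
Qed.

Lemma dual_intro (F G : 'I_N -> vec) : is_frame F ->
  (forall f, f = \sum_i inner f (F i) *: G i /\ f = \sum_i inner f (G i) *: F i) ->
  is_dual F G.
Proof.
move=> hF h; split => //; apply: recon_frame hF _ => f; exact: (h f).2.
Qed.

Lemma herm_zero (T : 'M[K]_n) :
  (forall x y, inner (T *m y) x = cj (inner (T *m x) y)) ->
  (forall x, inner (T *m x) x = 0) -> T = 0.
Proof.
move=> hs hz.
have hre : forall x y, re (inner (T *m x) y) = 0.
  move=> x y; apply: (re_uniq Hg); rewrite -(hs x y).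
  have := hz (x + y); rewrite mulmxDr !innerDl !(innerDr Hg) hz hz.
  by rewrite add0r addr0 mul0rn (ofR0 Hg) => ->.
have hT : forall x : vec, T *m x = 0.
  move=> x; apply: (nsq_eq0 Hg); have := hre x (T *m x).
  by rewrite (inner_self Hg) reR.
apply/matrixP => i j; rewrite mxE.
have : (col j T) i 0 = 0 by rewrite colE hT mxE.
by rewrite mxE.
Qed.

Lemma tight_op (F : 'I_N -> vec) : is_tight_frame F ->
  exists A : R, 0 < A /\ frame_op F = (ofR A)%:M.
Proof.
move=> [_ [A [A0 hA]]]; exists A; split => //.
apply/eqP; rewrite -subr_eq0; apply/eqP; apply: herm_zero.
- move=> x y; rewrite !mulmxBl !mul_scalar_mx !frame_opE.
  rewrite !innerBl !innerZl !inner_suml (cjB Hg) (cj_sum Hg) (cjM Hg) (cjR Hg) -(inner_cj Hg x y).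
  congr (_ - _); apply: eq_bigr => i _.
  by rewrite !innerZl (cjM Hg) -!(inner_cj Hg) mulrC.
- move=> x; rewrite mulmxBl mul_scalar_mx frame_opE innerBl innerZl inner_suml.
  rewrite (inner_self Hg) -(ofRM Hg).
  have -> : \sum_i inner (inner x (F i) *: F i) x = ofR (\sum_i ab (inner x (F i)) ^+ 2).
    rewrite (ofR_sum Hg); apply: eq_bigr => i _.
    by rewrite innerZl (inner_cj Hg x (F i)) (normK Hg).
  by rewrite hA vnorm_sqr subrr.
Qed.

Lemma canonE (F : 'I_N -> vec) A : frame_op F = (ofR A)%:M ->
  forall i, canon_dual F i = ofR A^-1 *: F i.
Proof.
by move=> h i; rewrite /canon_dual h invmx_scalar mul_scalar_mx (ofRV Hg).
Qed.

End Gen4.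

Section Gen5.
Variables (R : realType) (S : scalars R) (Hg : good S).
Local Notation K := (sK S).
Local Notation cj := (@sconj _ S).
Local Notation ab := (@sabs _ S).
Local Notation ofR := (@sofR _ S).
Local Notation re := (gre Hg).
Variables n : nat.
Local Notation vec := 'cV[K]_n.

Lemma comb_eq (t : R) (u g : vec) :
  ofR (1 - t) *: u + ofR t *: g = u + ofR t *: (g - u).
Proof.
rewrite (ofRB Hg) (ofR1 Hg) scalerBl scale1r scalerBr.
by rewrite -addrA [- _ + _]addrC.
Qed.

Lemma vnormN (x : vec) : vnorm (- x) = vnorm x.
Proof.
have -> : - x = ofR (-1) *: x by rewrite (ofRN Hg) (ofR1 Hg) scaleN1r.
by rewrite (vnormZ Hg) (abR Hg) normrN normr1 mul1r.
Qed.

Lemma key (A q M : R) (u g : vec) : 0 < A -> 0 <= q ->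
  q * vnorm u * vnorm (ofR A *: u) <= M ->
  (q * vnorm g * vnorm (ofR A *: u) + q * ab (inner g (ofR A *: u))) / 2 <= M ->
  exists t0, 0 < t0 /\ forall t, 0 < t <= t0 ->
    q * vnorm (ofR (1 - t) *: u + ofR t *: g) * vnorm (ofR A *: u) <= M.
Proof.
move=> A0 q0 hm hA.
have vfE : vnorm (ofR A *: u) = A * vnorm u by rewrite (vnormZ Hg) (abR_ge0 Hg) // ltW.
set vu := vnorm u; set m := q * vu * vnorm (ofR A *: u).
have vu0 : 0 <= vu by apply: vnorm_ge0.
have vg0 : 0 <= vnorm g by apply: vnorm_ge0.
have m0 : 0 <= m by rewrite /m vfE !mulr_ge0 // ltW.
have [mM|Mm] := ltP m M.
  set X := q * vnorm g * vnorm (ofR A *: u).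
  have X0 : 0 <= X by rewrite /X vfE !mulr_ge0 // ltW.
  exists (Num.min 1 ((M - m) / (X + 1))); split.
    by rewrite lt_min ltr01 /= divr_gt0 // ?subr_gt0 // ltr_wpDl.
  move=> t /andP[t0]; rewrite le_min => /andP[t1 tM].
  rewrite ler_pdivlMr ?ltr_wpDl // in tM.
  have hv : vnorm (ofR (1 - t) *: u + ofR t *: g) <= (1 - t) * vu + t * vnorm g.
    apply: (le_trans (vnormD Hg _ _)).
    by rewrite !(vnormZ Hg) !(abR_ge0 Hg) ?subr_ge0 // ltW.
  apply: (le_trans (y := q * ((1 - t) * vu + t * vnorm g) * vnorm (ofR A *: u))).
    by apply: ler_wpM2r; [exact: vnorm_ge0 | apply: ler_wpM2l].
  have -> : q * ((1 - t) * vu + t * vnorm g) * vnorm (ofR A *: u) = (1 - t) * m + t * X.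
    by rewrite /m /X; ring.
  have : 0 <= t * m by rewrite mulr_ge0 // ltW.
  nra.
have mE : m = M by apply/eqP; rewrite eq_le Mm hm.
have [z|nz] := eqVneq (q * vnorm (ofR A *: u)) 0.
  exists 1; split => // t _.
  by rewrite mulrAC z mul0r -mE.
have qp : 0 < q by rewrite lt_def q0 andbT; apply: contraNneq nz => ->; rewrite mul0r.
have vup : 0 < vu.
  rewrite lt_def vu0 andbT; apply: contraNneq nz => h.
  by rewrite vfE -/vu h !mulr0.
have [gu|gu] := eqVneq g u.
  exists 1; split => // t _; rewrite gu -scalerDl -(ofRD Hg) subrK (ofR1 Hg) scale1r.
  by rewrite -mE.
have H : vnorm g * vu + ab (inner g u) <= 2 * nsq u.
  have hinn : inner g (ofR A *: u) = ofR A * inner g u by rewrite (innerZr Hg) (cjR Hg).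
  rewrite hinn (abM Hg) (abR_ge0 Hg) ?(ltW A0) // vfE in hA.
  have hM : M = q * A * vu ^+ 2 by rewrite -mE /m vfE -/vu; ring.
  rewrite hM ler_pdivrMr // in hA.
  rewrite -vnorm_sqr -/vu -(ler_pM2l (mulr_gt0 qp A0)).
  rewrite -/vu in hA; lra.
set d := nsq u - re (inner g u).
have dp : 0 < d.
  rewrite /d subr_gt0; rewrite ltNge; apply/negP => hre.
  have hab : nsq u <= ab (inner g u) := le_trans hre (re_le Hg _).
  have hvg : vnorm g <= vu.
    have : vnorm g * vu <= vu * vu by rewrite -expr2 vnorm_sqr; lra.
    by rewrite ler_pM2r.
  have hng : nsq g <= nsq u.
    by rewrite -!vnorm_sqr -/vu; apply: lerXn2r; rewrite ?nnegrE.
  have : nsq (g - u) <= 0.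
    rewrite (nsqD Hg) (innerNr Hg) (reN Hg).
    have -> : nsq (- u) = nsq u by rewrite -!vnorm_sqr vnormN.
    rewrite mulr2n; lra.
  move=> h; apply/negP: gu; rewrite negbK; apply/eqP/subr0_eq.
  apply: (nsq_eq0 Hg); apply/eqP; rewrite eq_le h nsq_ge0.
  done.
set v := g - u.
exists (Num.min 1 ((d *+ 2) / (nsq v + 1))); split.
  by rewrite lt_min ltr01 /= divr_gt0 // ?mulrn_wgt0 // ltr_wpDl // nsq_ge0.
move=> t /andP[t0]; rewrite le_min => /andP[t1 tM].
rewrite ler_pdivlMr ?ltr_wpDl ?nsq_ge0 // in tM.
rewrite comb_eq -/v -mE /m; apply: ler_wpM2r; first exact: vnorm_ge0.
apply: ler_wpM2l => //.
rewrite !vnormE ler_sqrt ?nsq_ge0 // (nsqD Hg) (nsqZ Hg) (abR_ge0 Hg) ?(ltW t0) //.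
rewrite (innerZr Hg) (cjR Hg) (reZ Hg).
have hr : re (inner u v) = - d.
  rewrite /v (innerBr Hg) (reB Hg) (inner_self Hg) (reR Hg) -(re_cj Hg) -(inner_cj Hg).
  by rewrite /d opprB.
rewrite hr.
have nv0 : 0 <= nsq v by apply: nsq_ge0.
have : t * nsq v <= d *+ 2.
  by apply: (le_trans _ tM); rewrite ler_pM2l // lerDl.
rewrite mulr2n => h1; rewrite mulr2n -/(nsq u); nra.
Qed.

End Gen5.

Section Gen6.
Variables (R : realType) (S : scalars R) (Hg : good S).
Local Notation K := (sK S).
Local Notation cj := (@sconj _ S).
Local Notation ab := (@sabs _ S).
Local Notation ofR := (@sofR _ S).
Local Notation re := (gre Hg).
Variables n N : nat.
Local Notation vec := 'cV[K]_n.
Variables (F : 'I_N -> vec) (p : 'I_N -> R).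
Hypothesis hq : forall i, 0 <= weight n p i.

Definition oG (G : 'I_N -> vec) i := weight n p i * vnorm (G i) * vnorm (F i).
Definition aG (G : 'I_N -> vec) i :=
  (oG G i + weight n p i * ab (inner (G i) (F i))) / 2.

Lemma err1 G i : err_op p F G [set i] = ofR (weight n p i) *: (G i *m vadj (F i)).
Proof. by rewrite /err_op big_set1. Qed.

Lemma O1_ge G i : oG G i <= O1 p F G.
Proof.
have h : #|[set i]| == 1%N by rewrite cards1.
have := @le_bigmax_cond _ _ _ 0 [set i] (fun L : {set 'I_N} => #|L| == 1%N)
  (fun L => opnorm (err_op p F G L)) h.
by rewrite /= err1 (opnorm_rank1 Hg).
Qed.

Lemma A1_ge G i : aG G i <= A1 p F G.
Proof.
have h : #|[set i]| == 1%N by rewrite cards1.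
have := @le_bigmax_cond _ _ _ 0 [set i] (fun L : {set 'I_N} => #|L| == 1%N) (fun L =>
  (opnorm (err_op p F G L) + specrad (err_op p F G L)) / 2) h.
by rewrite /= err1 (opnorm_rank1 Hg) // (specrad_rank1 Hg).
Qed.

Lemma O1_le G X : 0 <= X -> (forall i, oG G i <= X) -> O1 p F G <= X.
Proof.
move=> X0 h; apply: bigmax_le => // L /cards1P [i ->].
by rewrite err1 (opnorm_rank1 Hg) //; apply: h.
Qed.

Lemma A1_le G X : 0 <= X -> (forall i, aG G i <= X) -> A1 p F G <= X.
Proof.
move=> X0 h; apply: bigmax_le => // L /cards1P [i ->].
by rewrite err1 (opnorm_rank1 Hg) // (specrad_rank1 Hg) //; apply: h.
Qed.

Lemma O1_ge0 G : 0 <= O1 p F G.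
Proof. exact: bigmax_ge_id. Qed.
Lemma A1_ge0 G : 0 <= A1 p F G.
Proof. exact: bigmax_ge_id. Qed.

Lemma aG_le G i : aG G i <= oG G i.
Proof.
rewrite /aG; set o := oG G i; set w := weight n p i * ab (inner (G i) (F i)).
have h : w <= o.
  by rewrite /w /o /oG -mulrA; apply: ler_wpM2l => //; apply: inner_le.
move: o w h => o w h.
lra.
Qed.

Lemma A1_le_O1 G : A1 p F G <= O1 p F G.
Proof.
apply: A1_le; first exact: O1_ge0.
by move=> i; apply: le_trans (aG_le G i) (O1_ge G i).
Qed.

Lemma lin_comb (a : 'I_N -> K) (x y : 'I_N -> vec) al be :
  \sum_i a i *: (al *: x i + be *: y i) =
  al *: \sum_i a i *: x i + be *: \sum_i a i *: y i.
Proof.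
rewrite !scaler_sumr -big_split; apply: eq_bigr => i _.
by rewrite scalerDr !scalerA [a i * _]mulrC [a i * be]mulrC.
Qed.

Lemma comb_id t (f : vec) : ofR (1 - t) *: f + ofR t *: f = f.
Proof. by rewrite -scalerDl -(ofRD Hg) subrK (ofR1 Hg) scale1r. Qed.

Lemma dual_comb (G1 G2 : 'I_N -> vec) t : is_frame F ->
  is_dual F G1 -> is_dual F G2 ->
  is_dual F (fun i => ofR (1 - t) *: G1 i + ofR t *: G2 i).
Proof.
move=> hF [_ h1] [_ h2]; apply: (dual_intro Hg) => // f; split.
  by rewrite lin_comb -(h1 f).1 -(h2 f).1 comb_id.
have -> : \sum_i inner f (ofR (1 - t) *: G1 i + ofR t *: G2 i) *: F i =
  ofR (1 - t) *: \sum_i inner f (G1 i) *: F i + ofR t *: \sum_i inner f (G2 i) *: F i.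
  rewrite !scaler_sumr -big_split; apply: eq_bigr => i _.
  by rewrite (innerDr Hg) !(innerZr Hg) !(cjR Hg) scalerDl !scalerA.
by rewrite -(h1 f).2 -(h2 f).2 comb_id.
Qed.

Theorem main_gen : is_tight_frame F ->
  (unique_POD_among_duals p F (canon_dual F) <->
   unique_PASOD_among_duals p F (canon_dual F)).
Proof.
move=> hT; have hF : is_frame F := hT.1.
have [A [A0 hA]] := tight_op Hg hT.
have cE := canonE Hg hA.
set c := canon_dual F.
have Fc : forall i, F i = ofR A *: c i.
  move=> i; rewrite /c cE scalerA -(ofRM Hg) mulfV ?gt_eqF // (ofR1 Hg).
  by rewrite scale1r.
have dual_c : is_dual F c.
  apply: (dual_intro Hg) => // f.
  have hS : f = ofR A^-1 *: \sum_i inner f (F i) *: F i.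
    by rewrite -frame_opE hA mul_scalar_mx scalerA -(ofRM Hg) mulVf ?gt_eqF //
      (ofR1 Hg) scale1r.
  split.
    rewrite {1}hS scaler_sumr; apply: eq_bigr => i _.
    by rewrite /c cE !scalerA mulrC.
  rewrite {1}hS scaler_sumr; apply: eq_bigr => i _.
  by rewrite /c cE (innerZr Hg) (cjR Hg) scalerA.
have aoc : forall i, aG c i = oG c i.
  move=> i; rewrite /aG /oG /c cE innerZl (inner_self Hg) -(ofRM Hg).
  rewrite (abR_ge0 Hg) ?mulr_ge0 ?invr_ge0 ?nsq_ge0 ?(ltW A0) //.
  rewrite (vnormZ Hg) (abR_ge0 Hg) ?invr_ge0 ?(ltW A0) // -vnorm_sqr.
  have -> : weight n p i * (A^-1 * vnorm (F i) ^+ 2) = weight n p i * (A^-1 * vnorm (F i)) * vnorm (F i) by rewrite expr2; ring.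
  set z := weight n p i * (A^-1 * vnorm (F i)) * vnorm (F i).
  by rewrite -mulr2n -(mulr_natr z 2) mulfK // pnatr_eq0.
have Mc : A1 p F c = O1 p F c.
  apply/eqP; rewrite eq_le A1_le_O1 /=.
  by apply: O1_le; [exact: A1_ge0 | move=> i; rewrite -aoc; exact: A1_ge].
have core : forall G, is_dual F G -> A1 p F G <= O1 p F c ->
    exists G', is_dual F G' /\ O1 p F G' <= O1 p F c /\ (G' = c -> G = c).
  move=> G dG hAG.
  have hi : forall i, exists t0 : R, 0 < t0 /\ forall t, 0 < t <= t0 ->
      weight n p i * vnorm (ofR (1 - t) *: c i + ofR t *: G i) * vnorm (F i)
        <= O1 p F c.
    move=> i; rewrite Fc; apply: (key Hg A0 (hq i)).
      by rewrite -Fc; exact: O1_ge c i.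
    by rewrite -Fc; exact: le_trans (A1_ge G i) hAG.
  have [tf htf] := choice hi.
  set t := \big[Num.min/1]_i tf i.
  have t0 : 0 < t.
    rewrite /t; elim/big_ind: _ => //; last by move=> i _; case: (htf i).
    by move=> x y hx hy; rewrite lt_min hx hy.
  have tle : forall i, t <= tf i by move=> i; exact: bigmin_le.
  exists (fun i => ofR (1 - t) *: c i + ofR t *: G i); split; last split.
  - exact: dual_comb.
  - apply: O1_le; first exact: O1_ge0.
    by move=> i; rewrite /oG; apply: (htf i).2; rewrite t0 tle.
  - move=> e; apply: funext => i.
    have := congr1 (fun H => H i) e => /= /eqP.
    rewrite (comb_eq Hg) -subr_eq0 addrAC subrr add0r scaler_eq0 (ofR_eq0 Hg).
    by rewrite (gt_eqF t0) /= subr_eq0 => /eqP.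
split.
- case=> [[_ PODc] uPOD].
  have PASODc : PASOD_among_duals p F c.
    split; first exact: dual_c.
    move=> G dG; rewrite leNgt; apply/negP => hlt.
    have hle : A1 p F G <= O1 p F c by rewrite -Mc; apply: ltW.
    have [G' [dG' [hG' e]]] := core G dG hle.
    have : G' = c.
      apply: uPOD; split; first exact: dG'.
      by move=> G'' dG''; apply: le_trans hG' (PODc G'' dG'').
    by move/e => Gc; move: hlt; rewrite Gc ltxx.
  split; first exact: PASODc.
  move=> G [dG hG].
  have hle : A1 p F G <= O1 p F c by rewrite -Mc; apply: hG.
  have [G' [dG' [hG' e]]] := core G dG hle.
  apply: e; apply: uPOD; split; first exact: dG'.
  by move=> G'' dG''; apply: le_trans hG' (PODc G'' dG'').
- case=> [[_ PASc] uPAS].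
  have PODc : POD_among_duals p F c.
    split; first exact: dual_c.
    by move=> G dG; rewrite -Mc; apply: le_trans (PASc G dG) (A1_le_O1 G).
  split; first exact: PODc.
  move=> G [dG hG]; apply: uPAS; split; first exact: dG.
  move=> G'' dG''.
  apply: le_trans (A1_le_O1 G) _; apply: le_trans (hG c dual_c) _.
  by rewrite -Mc; apply: PASc.
Qed.

End Gen6.

Lemma weight_ge0 (R : realType) (n N : nat) (p : 'I_N -> R) :
  prob_seq p -> forall i, 0 <= weight n p i.
Proof.
move=> [hp hs] i; rewrite /weight hs; apply: mulr_ge0; last first.
  by apply: divr_ge0; apply: ler0n.
apply: divr_ge0 => //; rewrite subr_ge0; by case/andP: (hp i).
Qed.

Theorem theorem4p4 :
  forall (R : realType) (S : scalars R),
    S = realScalars R \/ S = complexScalars R ->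
  forall (n N : nat) (F : 'I_N -> 'cV[sK S]_n) (p : 'I_N -> R),
    is_tight_frame F -> prob_seq p ->
    (unique_POD_among_duals p F (canon_dual F) <->
     unique_PASOD_among_duals p F (canon_dual F)).
Proof.
move=> R S HS; case: HS => -> n N F p hT hp.
  exact: (main_gen (good_real R) (weight_ge0 n hp) hT).
exact: (main_gen (good_complex R) (weight_ge0 n hp) hT).
Qed.
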